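(* Let $r\ge 2$, let $H$ be a digraph (possibly with loops) and let $D$ be an $H$-colored $r$-partite tournament. If $k \geq 5$, then $D$ has a $(k,H)$-kernel.
   Context: All digraphs are finite. An $r$-partite tournament is a digraph whose vertex set is partitioned into $r$ disjoint independent sets such that every two vertices in different classes are joined by exactly one arc (an asymmetric arc). $D$ has no loops and comes with a map $\rho: A(D)\to V(H)$. For a walk $W=(x_0,\ldots,x_n)$ in $D$, there is an obstruction on $x_i$ if $(\rho(x_{i-1},x_i),\rho(x_i,x_{i+1})) \notin A(H)$; for an open walk this is considered at internal vertices $x_i$, $1\le i\le n-1$, for a closed walk at all $i\in\{0,\ldots,n-1\}$ with indices modulo $n$. $O_H(W)$ is the set of indices with an obstruction; the $H$-length is $l_H(W)=|O_H(W)|+1$ for open $W$ and $|O_H(W)|$ for closed $W$. A $(k,H)$-kernel ($k\ge2$) is a set $S\subseteq V(D)$ such that for every two distinct $u,v\in S$ every directed $uv$-path in $D$ has $H$-length at least $k$, and for every $x\in V(D)\setminus S$ there is a directed path from $x$ to a vertex of $S$ of $H$-length at most $k-1$. *)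

(* Defs.v *)
From mathcomp Require Import all_boot.
Set Implicit Arguments. Unset Strict Implicit. Unset Printing Implicit Defensive.

(* The H-colouring rho : A(D) -> V(H) is given as a function V -> V -> W,
   only its values on arcs (x,y) with A x y are relevant. *)

Fixpoint nobs (V W : Type) (HA : rel W) (rho : V -> V -> W) (s : seq V) : nat :=
  match s with
  | x :: ((y :: z :: _) as t) => (~~ HA (rho x y) (rho y z)) + nobs HA rho t
  | _ => 0
  end.

Definition Hlength (V W : Type) (HA : rel W) (rho : V -> V -> W) (s : seq V) : nat :=
  (nobs HA rho s).+1.

Definition dpath (V : finType) (A : rel V) (u v : V) (p : seq V) : Prop :=
  path A u p /\ uniq (u :: p) /\ last u p = v.

Definition r_partite_tournament (V : finType) (A : rel V) (r : nat) : Prop :=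
  exists part : V -> 'I_r,
    (forall i : 'I_r, exists x, part x = i) /\
    (forall x y, part x = part y -> ~~ A x y) /\
    (forall x y, part x <> part y -> A x y (+) A y x).

Definition kH_kernel (V W : finType) (A : rel V) (HA : rel W) (rho : V -> V -> W)
    (k : nat) (S : {set V}) : Prop :=
  (forall u v, u \in S -> v \in S -> u <> v ->
     forall p, dpath A u v p -> k <= Hlength HA rho (u :: p)) /\
  (forall x, x \notin S ->
     exists v p, v \in S /\ dpath A x v p /\ Hlength HA rho (x :: p) <= k.-1).

(* Main.v *)
Require Import Defs.
From mathcomp Require Import all_boot.

Set Implicit Arguments. Unset Strict Implicit. Unset Printing Implicit Defensive.

Section Aux.
Variables (V W : finType) (A : rel V) (HA : rel W) (rho : V -> V -> W).

Lemma nobs_le s : nobs HA rho s <= (size s).-2.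
Proof.
elim: s => [|x s IH] //; case: s IH => [|y [|z t]] IH //=.
have := leq_b1 (~~ HA (rho x y) (rho y z)).
move: IH => /=; rewrite /= => IH H1.
by have := leq_add H1 IH; rewrite add1n.
Qed.

Lemma Hlen_le x p : p != [::] -> Hlength HA rho (x :: p) <= size p.
Proof.
case: p => [|y p] // _; rewrite /Hlength; have := nobs_le (x :: y :: p).
by rewrite /=.
Qed.

Lemma walk_dpath x v p : path A x p -> last x p = v -> x != v ->
  exists p', dpath A x v p' /\ size p' <= size p /\ p' != [::].
Proof.
move=> Hp; case: (shortenP Hp) => p' Hp' Hu Hs Hl Hxv.
exists p'; split; first by [].
split.
  apply: uniq_leq_size => //; by case/andP: Hu.
case: p' Hp' Hu Hs Hl => //= Hp' Hu Hs Hl; by rewrite Hl eqxx in Hxv.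
Qed.

Variables (r : nat) (part : V -> 'I_r).
Hypothesis Hind : forall x y, part x = part y -> ~~ A x y.
Hypothesis Htour : forall x y, part x <> part y -> A x y (+) A y x.

Lemma tour a b : part a <> part b -> ~~ A a b -> A b a.
Proof. by move=> /Htour; case: (A a b). Qed.

Lemma arc_part a b : A a b -> part a <> part b.
Proof. by move=> Hab Hp; move: (Hind Hp); rewrite Hab. Qed.

Definition w2 x v := [|| x == v, A x v | [exists w, A x w && A w v]].
Definition w3 x v := w2 x v || [exists w1, exists w2, [&& A x w1, A w1 w2 & A w2 v]].
Definition Q v := [set x | w2 x v].

Lemma claim3 v : (forall u, #|Q u| <= #|Q v|) ->
  forall x, part x <> part v -> exists p, path A x p /\ last x p = v /\ size p <= 3.
Proof.
move=> Hmax x Hxv.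
case H3: (w3 x v).
  move: H3; rewrite /w3 /w2 => /orP [/or3P [/eqP->|Axv|/existsP [w /andP [Axw Awv]]]|].
  - by exists [::].
  - by exists [:: v]; rewrite /= Axv.
  - by exists [:: w; v]; rewrite /= Axw Awv.
  - move=> /existsP [w1 /existsP [w2' /and3P [H1 H2 H4]]].
    by exists [:: w1; w2'; v]; rewrite /= H1 H2 H4.
exfalso.
have NA : forall a b, A x a -> A a b -> A b v -> False.
  move=> a b H1 H2 H4; move: H3; rewrite /w3.
  by move/negbT; rewrite negb_or => /andP [_ /existsPn /(_ a) /existsPn /(_ b)];
    rewrite H1 H2 H4.
have NB : forall a, A x a -> A a v -> False.
  move=> a H1 H2; move: H3; rewrite /w3 /w2.
  by move/negbT; rewrite !negb_or => /andP [/and3P [_ _ /existsPn /(_ a)]];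
    rewrite H1 H2.
have NAxv : ~~ A x v.
  apply/negP => H; move: H3; rewrite /w3 /w2.
  by rewrite H orbT.
have Avx : A v x by apply: tour => // E; apply: Hxv.
have F1 : forall y, A y v -> part y <> part x -> A y x.
  move=> y Ayv Hyx; apply: tour; first by move=> E; apply: Hyx; rewrite E.
  apply/negP => Axy; exact: NB Axy Ayv.
have Hsub : Q v \subset Q x.
  apply/subsetP => y; rewrite !inE /w2 => /or3P
    [/eqP->|Ayv|/existsP [w /andP [Ayw Awv]]].
  - by rewrite Avx orbT.
  - case: (eqVneq (part y) (part x)) => [E|/eqP E].
      by apply/orP; right; apply/orP; right; apply/existsP; exists v; rewrite Ayv Avx.
    by rewrite F1 ?orbT.
  - case: (eqVneq (part y) (part x)) => [E|/eqP E].
      have Ewx : part w <> part x by rewrite -E => E'; apply: (arc_part Ayw); rewrite E'.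
      by apply/orP; right; apply/orP; right; apply/existsP; exists w; rewrite Ayw F1.
    have : A y x.
      apply: tour; first by move=> E'; apply: E; rewrite E'.
      apply/negP => Axy; exact: NA Axy Ayw Awv.
    by move=> ->; rewrite orbT.
have Hprop : Q v \proper Q x.
  apply/properP; split => //; exists x; first by rewrite inE /w2 eqxx.
  by rewrite inE; apply/negP => H; move: H3; rewrite /w3 H.
by have := proper_card Hprop; rewrite ltnNge Hmax.
Qed.

End Aux.

Theorem theorem25 (V W : finType) (A : rel V) (HA : rel W) (rho : V -> V -> W)
    (r k : nat) :
  2 <= r ->
  (forall x, ~~ A x x) ->
  r_partite_tournament A r ->
  5 <= k ->
  exists S : {set V}, kH_kernel A HA rho k S.
Proof.
move=> Hr Hloop [part [Hsurj [Hind Htour]]] Hk.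
have Hwalk : forall x v p, path A x p -> last x p = v -> x != v -> size p <= 4 ->
    exists p', dpath A x v p' /\ Hlength HA rho (x :: p') <= k.-1.
  move=> x v p Hp Hl Hxv Hs; have [p' [Hd [Hs' Hne]]] := walk_dpath Hp Hl Hxv.
  exists p'; split => //.
  apply: leq_trans (Hlen_le HA rho x Hne) _.
  apply: leq_trans Hs' _; apply: leq_trans Hs _; by case: k Hk => [|[|[|[|[|k']]]]].
case: (boolP [exists s, [forall y, ~~ A s y]]) => [/existsP [s0 /forallP Hs0]| Hns].
  exists [set s | [forall y, ~~ A s y]]; split.
    move=> u v Hu Hv Huv p [Hp [_ Hl]].
    case: p Hp Hl => [|y p] /=; first by move=> _ E; exfalso; apply: Huv.
    move: Hu; rewrite inE => /forallP /(_ y) /negbTE -> //.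
  move=> x; rewrite inE => /forallPn [y]; rewrite negbK => Axy.
  have Hxs0 : x != s0.
    by apply/eqP => E; move: (Hs0 y); rewrite -E Axy.
  have Hs0S : s0 \in [set s | [forall y, ~~ A s y]] by rewrite inE; apply/forallP.
  case: (eqVneq (part x) (part s0)) => [E|/eqP E].
    have Hy : part y <> part s0 by rewrite -E => E'; apply: (arc_part Hind Axy); rewrite E'.
    have Ays0 : A y s0.
      apply: (tour Htour); [by move=> E'; apply: Hy; rewrite E' | exact: Hs0].
    have [p' [Hd Hl]] := Hwalk x s0 [:: y; s0] (introT andP (conj Axy (introT andP (conj Ays0 isT)))) erefl Hxs0 isT.
    by exists s0, p'.
  have Axs0 : A x s0.
    apply: (tour Htour); [by move=> E'; apply: E; rewrite E' | exact: Hs0].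
  have [p' [Hd Hl]] := Hwalk x s0 [:: s0] (introT andP (conj Axs0 isT)) erefl Hxs0 isT.
  by exists s0, p'.
have Hout : forall s, exists y, A s y.
  move=> s; move/existsPn: Hns => /(_ s) /forallPn [y]; rewrite negbK => H; by exists y.
have [v0 _] := Hsurj (Ordinal (leq_trans (isT : 0 < 2) Hr)).
case: (arg_maxnP (fun v => #|Q A v|) (isT : xpredT v0)) => v _ Hmax.
have Hmax' : forall u, #|Q A u| <= #|Q A v| by move=> u; apply: Hmax.
have C3 := claim3 Hind Htour Hmax'.
exists [set v]; split.
  by move=> u v' Hu Hv Huv; exfalso; apply: Huv; move: Hu Hv; rewrite !inE => /eqP -> /eqP ->.
move=> x; rewrite inE => Hxv.
case: (eqVneq (part x) (part v)) => [E|/eqP E].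
  have [y Axy] := Hout x.
  have Hy : part y <> part v by rewrite -E => E'; apply: (arc_part Hind Axy); rewrite E'.
  have [p [Hp [Hl Hs]]] := C3 y Hy.
  have [p' [Hd Hl']] := Hwalk x v (y :: p) (introT andP (conj Axy Hp)) Hl Hxv Hs.
  by exists v, p'; rewrite inE eqxx.
have [p [Hp [Hl Hs]]] := C3 x E.
have [p' [Hd Hl']] := Hwalk x v p Hp Hl Hxv (leq_trans Hs (isT : 3 <= 4)).
by exists v, p'; rewrite inE eqxx.
Qed.
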